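(* Let $\Xi$ be an orthogonally invariant FQ operation with circular-basis coefficients $\tilde p^{[s]}_{i_1,\dots,i_r}$ ($s=0$ scalar, $s\in\{1,2\}$ vectorial components, $s=12$ pseudoscalar). For a word $w$ over $\{1,2\}$ let $\mathrm{red}\,w$ be its shortest reduction under the rules $11=\lambda$, $22=\lambda$ ($\lambda$ the empty word). Let $\iota=(i_1,\dots,i_r)$ with all $i_j\in\{1,2\}$. If $\mathrm{red}\,\iota\notin\{\lambda,(2)\}$, and moreover either $s\in\{0,12\}$ or $\mathrm{red}\,\iota\notin\{(1),(2,1)\}$, then $\tilde p^{[s]}_{i_1,\dots,i_r}=0$.
   Context: Setting. $(Q_1,Q_2)$ is a Clifford system: $Q_1^2=Q_2^2=-1$, $Q_1Q_2=-Q_2Q_1$. $R_1,R_2$ are formal noncommuting infinitesimal variables; one works in the real algebra generated by $Q_1,Q_2,R_1,R_2$ (free apart from the Clifford relations), completed with respect to total degree in $R_1,R_2$, or in extensions of it by further formal infinitesimal elements. Put $A_i=Q_i+R_i$. For $Q$ with $Q^2=-1$ and any $X$ put $X^0_Q=\frac12(X+Q^{-1}XQ)$, $X^1_Q=\frac12(X-Q^{-1}XQ)$. The split variables are $r_1,\dots,r_8$: for $j\in\{1,2\}$, $\iota_1,\iota_2\in\{0,1\}$, $r_{4(j-1)+2\iota_1+\iota_2+1}=((R_jQ_j^{-1})^{\iota_1}_{Q_1})^{\iota_2}_{Q_2}$. An FQ operation around $(Q_1,Q_2)$ is given by formal real noncommutative power series in eight variables: scalar $\Xi(A_1,A_2)=f_0(r_1,\dots,r_8)$,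 vectorial $\Xi(A_1,A_2)=(f_1(r)Q_1,f_2(r)Q_2)$, pseudoscalar $\Xi(A_1,A_2)=f_{12}(r)Q_1Q_2$; the operation is identified with this family of series. The same series can be evaluated relative to any other Clifford system $(Q_1',Q_2')$ at $(A_1',A_2')$ with $A'_i-Q'_i$ infinitesimal, by forming the split variables of $A_i'-Q_i'$ relative to $(Q'_1,Q'_2)$ and multiplying by $Q'_s$. Mixed basis: $\hat r_1=\frac12(r_2-r_7)$, $\hat r_2=\frac12(r_2+r_7)$, $\hat r_3=\frac12(r_1+r_5)$, $\hat r_4=\frac12(r_1-r_5)$, $\hat r_5=\frac12(r_4-r_8)$, $\hat r_6=\frac12(r_4+r_8)$, $\hat r_7=\frac12(r_3+r_6)$, $\hat r_8=\frac12(r_3-r_6)$. Circular basis: $\tilde r_i=\hat r_i$ for $i\notin\{4,5\}$, $\tilde r_4=\hat r_4+\hat r_5$, $\tilde r_5=\hat r_4-\hat r_5$. Rewriting $f_s$ as a power series in $\tilde r_1,\dots,\tilde r_8$, $\tilde p^{[s]}_{i_1,\dots,i_r}$ is the coefficient of $\tilde r_{i_1}\cdots\tilde r_{i_r}$. Orthogonal invariance: let $t$ be a central formal variable with $t^2=0$ and $\mathrm{Rot}_t(B_1,B_2)=(B_1+tB_2,\,B_2-tB_1)$. A (pseudo)scalar $\Xi$ is orthogonally invariant if $\Xi_{(Q_1,Q_2)}(A_1,A_2)=\Xi_{\mathrm{Rot}_t(Q_1,Q_2)}(\mathrm{Rot}_t(A_1,A_2))$; a vectorial $\Xi$ is orthogonally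 invariant if $\mathrm{Rot}_t(\Xi_{(Q_1,Q_2)}(A_1,A_2))=\Xi_{\mathrm{Rot}_t(Q_1,Q_2)}(\mathrm{Rot}_t(A_1,A_2))$; the subscript indicates the base Clifford system relative to which the series is evaluated. *)

(* Defs.v *)
(* FQ operations around a Clifford system (Q1,Q2), modelled
   concretely in the completed free real algebra generated by Q1,Q2,R1,R2
   subject only to the Clifford relations, extended by a central t, t^2 = 0. *)
From HB Require Import structures.
From mathcomp Require Import all_boot all_order all_algebra.
Set Implicit Arguments. Unset Strict Implicit. Unset Printing Implicit Defensive.
Import Order.TTheory GRing.Theory Num.Theory.
Local Open Scope ring_scope.

Section FQ.
Variable R : realFieldType.

(* ---------- The algebra <Q1,Q2,R1,R2 | Clifford>, completed in R-degree ----
   Normal form: every element is a (possibly infinite) formal sum of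
   e_{b0} R_{w0} e_{b1} R_{w1} ... R_{w(n-1)} e_{bn}, with e_a in the Clifford
   basis e_0 = 1, e_1 = Q1, e_2 = Q2, e_3 = Q1 Q2 (indices 'I_4), and R_0 = R1,
   R_1 = R2 (indices 'I_2).  An element is its coefficient function; only the
   well-formed indices (size b = size w + 1) are meaningful. *)
Definition alg := seq 'I_2 -> seq 'I_4 -> R.
Definition wf (w : seq 'I_2) (b : seq 'I_4) : Prop := size b = (size w).+1.
Definition aeq (x y : alg) : Prop := forall w b, wf w b -> x w b = y w b.

(* Clifford multiplication table: e_a e_b = cl_sign a b * e_(a xor b). *)
Definition cl_neg (a b : nat) : bool :=
  (a, b) \in [:: (1, 1); (2, 2); (3, 3); (1, 3); (3, 2); (2, 1)]%N.
Definition cl_sign (a b : 'I_4) : R := if cl_neg a b then -1 else 1.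
Definition cmul (a b c : 'I_4) : R :=
  if Nat.lxor a b == nat_of_ord c then cl_sign a b else 0.

Definition azero : alg := fun _ _ => 0.
Definition aadd (x y : alg) : alg := fun w b => x w b + y w b.
Definition ascale (c : R) (x : alg) : alg := fun w b => c * x w b.
Definition acl (a : 'I_4) : alg :=
  fun w b => if (w == [::]) && (b == [:: a]) then 1 else 0.
Definition aR (j : 'I_2) : alg :=
  fun w b => if (w == [:: j]) && (b == [:: ord0; ord0]) then 1 else 0.
Definition amul (x y : alg) : alg := fun w b =>
  \sum_(k < (size w).+1) \sum_(a : 'I_4) \sum_(c : 'I_4)
     x (take k w) (rcons (take k b) a) * y (drop k w) (c :: drop k.+1 b)
     * cmul a c (nth ord0 b k).

(* ---------- extension by a central t with t^2 = 0: pairs x + t y ---------- *)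
Definition dual := (alg * alg)%type.
Definition deq (x y : dual) : Prop := aeq x.1 y.1 /\ aeq x.2 y.2.
Definition demb (x : alg) : dual := (x, azero).
Definition dadd (x y : dual) : dual := (aadd x.1 y.1, aadd x.2 y.2).
Definition dscale (c : R) (x : dual) : dual := (ascale c x.1, ascale c x.2).
Definition dopp (x : dual) : dual := dscale (-1) x.
Definition dsub (x y : dual) : dual := dadd x (dopp y).
Definition dmul (x y : dual) : dual :=
  (amul x.1 y.1, aadd (amul x.1 y.2) (amul x.2 y.1)).
Definition done : dual := demb (acl ord0).
Definition dt : dual := (azero, acl ord0).

(* For Q with Q^2 = -1 (true for every Clifford system used below) Q^-1 = -Q. *)
Definition dinvQ (Q : dual) : dual := dopp Q.
Definition dpart (i : bool) (Q X : dual) : dual :=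
  dscale (1 / 2) (dadd X (dscale (if i then -1 else 1) (dmul (dmul (dinvQ Q) X) Q))).
(* split variable r_(k+1) (k : 'I_8 is 0-based):
   k = 4(j-1) + 2 iota1 + iota2,  r = ((R_j Q_j^-1)^iota1_Q1)^iota2_Q2,
   where R_j = A_j - Q_j. *)
Definition split_var (Q1 Q2 A1 A2 : dual) (k : 'I_8) : dual :=
  let j := (k %/ 4)%N in
  let i1 := odd (k %/ 2) in
  let i2 := odd k in
  let Qj := if j == 0%N then Q1 else Q2 in
  let Aj := if j == 0%N then A1 else A2 in
  dpart i2 Q2 (dpart i1 Q1 (dmul (dsub Aj Qj) (dinvQ Qj))).

(* f u = coefficient of the monomial r_(u1) ... r_(ur) *)
Definition series := seq 'I_8 -> R.
Definition dprod (s : seq dual) : dual := foldr dmul done s.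
(* Evaluation at infinitesimal arguments (all of R-degree >= 1): the
   component of R-degree n only receives contributions of monomials of
   length <= n, so the formal sum is a finite sum at each index. *)
Definition eval (f : series) (y : 'I_8 -> dual) : dual :=
  ((fun w b => \sum_(k < (size w).+1) \sum_(u : k.-tuple 'I_8)
                 f u * (dprod (map y u)).1 w b),
   (fun w b => \sum_(k < (size w).+1) \sum_(u : k.-tuple 'I_8)
                 f u * (dprod (map y u)).2 w b)).

Inductive FQop :=
  | FQscalar of series
  | FQvector of series & series
  | FQpseudo of series.

Inductive FQidx := I0 | I1 | I2 | I12.

Definition component (op : FQop) (s : FQidx) : option series :=
  match op, s with
  | FQscalar f, I0 => Some f
  | FQvector f _, I1 => Some f
  | FQvector _ g, I2 => Some g
  | FQpseudo f, I12 => Some f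
  | _, _ => None
  end.

Definition e1 : 'I_4 := @Ordinal 4 1 isT.
Definition e2 : 'I_4 := @Ordinal 4 2 isT.

Definition bQ1 : dual := demb (acl e1).
Definition bQ2 : dual := demb (acl e2).
Definition bA1 : dual := dadd bQ1 (demb (aR ord0)).
Definition bA2 : dual := dadd bQ2 (demb (aR ord_max)).

Definition rot1 (B1 B2 : dual) : dual := dadd B1 (dmul dt B2).
Definition rot2 (B1 B2 : dual) : dual := dsub B2 (dmul dt B1).

(* Value of the operation relative to the Clifford system (Q1,Q2) at (A1,A2);
   the result is a pair (second component unused for (pseudo)scalars). *)
Definition Xi (op : FQop) (Q1 Q2 A1 A2 : dual) : dual * dual :=
  let r := split_var Q1 Q2 A1 A2 in
  match op with
  | FQscalar f => (eval f r, eval f r)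
  | FQvector f1 f2 => (dmul (eval f1 r) Q1, dmul (eval f2 r) Q2)
  | FQpseudo f => (dmul (dmul (eval f r) Q1) Q2, dmul (dmul (eval f r) Q1) Q2)
  end.

Definition ortho_inv (op : FQop) : Prop :=
  let Q1' := rot1 bQ1 bQ2 in let Q2' := rot2 bQ1 bQ2 in
  let A1' := rot1 bA1 bA2 in let A2' := rot2 bA1 bA2 in
  let X := Xi op bQ1 bQ2 bA1 bA2 in
  let X' := Xi op Q1' Q2' A1' A2' in
  match op with
  | FQvector _ _ => deq (rot1 X.1 X.2) X'.1 /\ deq (rot2 X.1 X.2) X'.2
  | _ => deq X.1 X'.1
  end.

Definition mat8 (tbl : seq (seq R)) (i j : 'I_8) : R := nth 0 (nth [::] tbl i) j.
(* r_i in terms of hat r (inverse of the paper's definition of hat r):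
   r1 = h3+h4, r2 = h1+h2, r3 = h7+h8, r4 = h5+h6,
   r5 = h3-h4, r6 = h7-h8, r7 = h2-h1, r8 = h6-h5 *)
Definition r_of_hat : 'I_8 -> 'I_8 -> R := mat8
  [:: [:: 0; 0; 1; 1; 0; 0; 0; 0];
      [:: 1; 1; 0; 0; 0; 0; 0; 0];
      [:: 0; 0; 0; 0; 0; 0; 1; 1];
      [:: 0; 0; 0; 0; 1; 1; 0; 0];
      [:: 0; 0; 1; -1; 0; 0; 0; 0];
      [:: 0; 0; 0; 0; 0; 0; 1; -1];
      [:: -1; 1; 0; 0; 0; 0; 0; 0];
      [:: 0; 0; 0; 0; -1; 1; 0; 0]].
Definition hat_of_tilde : 'I_8 -> 'I_8 -> R := mat8
  [:: [:: 1; 0; 0; 0; 0; 0; 0; 0];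
      [:: 0; 1; 0; 0; 0; 0; 0; 0];
      [:: 0; 0; 1; 0; 0; 0; 0; 0];
      [:: 0; 0; 0; 1/2; 1/2; 0; 0; 0];
      [:: 0; 0; 0; 1/2; -1/2; 0; 0; 0];
      [:: 0; 0; 0; 0; 0; 1; 0; 0];
      [:: 0; 0; 0; 0; 0; 0; 1; 0];
      [:: 0; 0; 0; 0; 0; 0; 0; 1]].
(* The paper's forward definitions, recorded for reference. *)
Definition hat_of_r : 'I_8 -> 'I_8 -> R := mat8
  [:: [:: 0; 1/2; 0; 0; 0; 0; -1/2; 0];
      [:: 0; 1/2; 0; 0; 0; 0; 1/2; 0];
      [:: 1/2; 0; 0; 0; 1/2; 0; 0; 0];
      [:: 1/2; 0; 0; 0; -1/2; 0; 0; 0];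
      [:: 0; 0; 0; 1/2; 0; 0; 0; -1/2];
      [:: 0; 0; 0; 1/2; 0; 0; 0; 1/2];
      [:: 0; 0; 1/2; 0; 0; 1/2; 0; 0];
      [:: 0; 0; 1/2; 0; 0; -1/2; 0; 0]].
Definition tilde_of_hat : 'I_8 -> 'I_8 -> R := mat8
  [:: [:: 1; 0; 0; 0; 0; 0; 0; 0];
      [:: 0; 1; 0; 0; 0; 0; 0; 0];
      [:: 0; 0; 1; 0; 0; 0; 0; 0];
      [:: 0; 0; 0; 1; 1; 0; 0; 0];
      [:: 0; 0; 0; 1; -1; 0; 0; 0];
      [:: 0; 0; 0; 0; 0; 1; 0; 0];
      [:: 0; 0; 0; 0; 0; 0; 1; 0];
      [:: 0; 0; 0; 0; 0; 0; 0; 1]].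

Definition r_of_tilde (i k : 'I_8) : R :=
  \sum_(j : 'I_8) r_of_hat i j * hat_of_tilde j k.

(* coefficient of tilde r_(v1) ... tilde r_(vr) after substituting
   r_i = sum_k r_of_tilde i k * tilde r_k into f *)
Definition ptilde (f : series) (v : seq 'I_8) : R :=
  \sum_(u : (size v).-tuple 'I_8)
     f u * \prod_(j < size v) r_of_tilde (tnth u j) (nth ord0 v j).

End FQ.

Definition red_step (a : 'I_2) (acc : seq 'I_2) : seq 'I_2 :=
  if acc is b :: t then (if a == b then t else a :: acc) else [:: a].
Definition red (w : seq 'I_2) : seq 'I_2 := foldr red_step [::] w.

Definition letter1 : 'I_2 := ord0.
Definition letter2 : 'I_2 := ord_max.
(* letter i in {1,2} indexes tilde r_i *)
Definition letter8 (i : 'I_2) : 'I_8 := widen_ord (isT : (2 <= 8)%N) i.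

(* Main.v *)
Require Import Defs.
From HB Require Import structures.
From mathcomp Require Import all_boot all_order all_algebra.
From mathcomp Require Import ring lra zify.
Import GRing.Theory Num.Theory.
Local Open Scope ring_scope.
Set Implicit Arguments. Unset Strict Implicit. Unset Printing Implicit Defensive.

Section P1.
Variable R : realFieldType.
Local Notation M4 := 'M[R]_4.

Lemma ord4P (P : 'I_4 -> Prop) : P (@Ordinal 4 0 isT) -> P (@Ordinal 4 1 isT) ->
  P (@Ordinal 4 2 isT) -> P (@Ordinal 4 3 isT) -> forall a, P a.
Proof.
move=> H0 H1 H2 H3 [m Hm].
do 4 (case: m Hm => [|m] Hm; first by rewrite (bool_irrelevance Hm isT)).
by [].
Qed.

Lemma lxor_lt (a c : 'I_4) : (Nat.lxor a c < 4)%N.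
Proof. by move: a c; apply: ord4P; apply: ord4P. Qed.

Definition xo (a c : 'I_4) : 'I_4 := Ordinal (lxor_lt a c).

Lemma cmulE (a c m : 'I_4) : cmul R a c m = if xo a c == m then cl_sign R a c else 0.
Proof. by []. Qed.

Lemma cl_test : cl_sign R (@Ordinal 4 1 isT) (@Ordinal 4 2 isT) = 1.
Proof. rewrite /cl_sign /cl_neg /=. done. Qed.

Lemma assoc_sc (a c q p : 'I_4) :
  cl_sign R c q * cmul R a (xo c q) p = cl_sign R a c * cmul R (xo a c) q p.
Proof.
rewrite /cmul /cl_sign /=.
move: a c q p; apply: ord4P; apply: ord4P; apply: ord4P; apply: ord4P;
  rewrite /= ?mulr1 ?mul1r ?mulr0 ?mulrNN //.
all: ring.
Qed.


Lemma sum_cmul (V : lmodType R) (a c : 'I_4) (F : 'I_4 -> V) :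
  \sum_m cmul R a c m *: F m = cl_sign R a c *: F (xo a c).
Proof.
rewrite (bigD1 (xo a c)) //= cmulE eqxx big1 ?addr0 // => m Hm.
by rewrite cmulE eq_sym (negbTE Hm) scale0r.
Qed.

Lemma sum_cmulR (a c : 'I_4) (F : 'I_4 -> R) :
  \sum_m cmul R a c m * F m = cl_sign R a c * F (xo a c).
Proof.
rewrite (bigD1 (xo a c)) //= cmulE eqxx big1 ?addr0 // => m Hm.
by rewrite cmulE eq_sym (negbTE Hm) mul0r.
Qed.

Definition rho (a : 'I_4) : M4 := \matrix_(p, q) cmul R a q p.

Lemma rho_mul a c : rho a *m rho c = cl_sign R a c *: rho (xo a c).
Proof.
apply/matrixP => p q; rewrite !mxE.
transitivity (\sum_m cmul R c q m * cmul R a m p).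
  by apply: eq_bigr => m _; rewrite !mxE mulrC.
by rewrite sum_cmulR assoc_sc.
Qed.

Lemma sum_cmul_rho a c : \sum_m cmul R a c m *: rho m = rho a *m rho c.
Proof. by rewrite sum_cmul rho_mul. Qed.

Lemma rho0 : rho ord0 = 1%:M.
Proof.
apply/matrixP => p q; rewrite !mxE /cmul /cl_sign /=.
by move: p q; apply: ord4P; apply: ord4P.
Qed.

Fixpoint Sm (m : nat) (G : seq 'I_4 -> M4) : M4 :=
  if m is m'.+1 then \sum_(a : 'I_4) rho a *m Sm m' (fun s => G (a :: s)) else G [::].

Lemma Sm_ext m G G' : (forall s, size s = m -> G s = G' s) -> Sm m G = Sm m G'.
Proof.
elim: m G G' => [|m IH] G G' H /=; first by apply: H.
by apply: eq_bigr => a _; congr (_ *m _); apply: IH => s Hs; apply: H; rewrite /= Hs.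
Qed.

Lemma Sm_sum m (I : Type) (r : seq I) (P : pred I) (F : I -> seq 'I_4 -> M4) :
  Sm m (fun s => \sum_(i <- r | P i) F i s) = \sum_(i <- r | P i) Sm m (F i).
Proof.
elim: m F => [|m IH] F //=.
under eq_bigr => a _ do rewrite IH mulmx_sumr.
by rewrite exchange_big.
Qed.

Lemma Sm_scale m c G : Sm m (fun s => c *: G s) = c *: Sm m G.
Proof.
elim: m G => [|m IH] G //=.
rewrite scaler_sumr; apply: eq_bigr => a _; by rewrite IH scalemxAr.
Qed.

Lemma Sm_add m G G' : Sm m (fun s => G s + G' s) = Sm m G + Sm m G'.
Proof.
elim: m G G' => [|m IH] G G' //=.
rewrite -big_split; apply: eq_bigr => a _; by rewrite IH mulmxDr.
Qed.

Lemma Sm_mulr m G M : Sm m (fun s => G s *m M) = Sm m G *m M.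
Proof.
elim: m G => [|m IH] G //=.
rewrite mulmx_suml; apply: eq_bigr => a _; by rewrite IH mulmxA.
Qed.

Lemma Sm_cat k l G : Sm (k + l) G = Sm k (fun s => Sm l (fun t => G (s ++ t))).
Proof.
elim: k G => [|k IH] G //=.
apply: eq_bigr => a _; by rewrite IH.
Qed.

Lemma Sm0 m : Sm m (fun _ => 0) = 0.
Proof. elim: m => //= m IH; rewrite big1 // => a _; by rewrite IH mulmx0. Qed.

Definition Phi (x : alg R) (w : seq 'I_2) : M4 := Sm (size w).+1 (fun b => x w b *: 1%:M).

Lemma Phi_aeq x y w : aeq x y -> Phi x w = Phi y w.
Proof. by move=> H; apply: Sm_ext => b Hb; rewrite H. Qed.

Lemma Phi_amul_k (x y : alg R) (w : seq 'I_2) (k : nat) : (k <= size w)%N ->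
  Sm (size w).+1 (fun b => (\sum_(a : 'I_4) \sum_(c : 'I_4)
     x (take k w) (rcons (take k b) a) * y (drop k w) (c :: drop k.+1 b)
     * cmul R a c (nth ord0 b k)) *: 1%:M)
  = Phi x (take k w) *m Phi y (drop k w).
Proof.
move=> Hk.
have E : (size w).+1 = (k + (size w - k).+1)%N by rewrite addnS subnKC.
rewrite /Phi size_takel // size_drop E Sm_cat -[k.+1]addn1 Sm_cat -Sm_mulr.
apply: Sm_ext => s Hs /=.
set Y := fun c => Sm (size w - k) (fun t => y (drop k w) (c :: t) *: 1%:M).
transitivity (\sum_m rho m *m \sum_a \sum_c (x (take k w) (rcons s a) * cmul R a c m) *: Y c).
  apply: eq_bigr => m _; congr (_ *m _).
  have Hd : forall t : seq 'I_4, drop (k + 1) (s ++ m :: t) = t.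
    by move=> t; rewrite -cat_rcons drop_size_cat // size_rcons Hs addn1.
  have Ht : forall t : seq 'I_4, take k (s ++ m :: t) = s by move=> t; rewrite take_size_cat.
  have Hn : forall t : seq 'I_4, nth ord0 (s ++ m :: t) k = m by move=> t; rewrite nth_cat Hs ltnn subnn.
  under Sm_ext => t _ do rewrite Hd Ht Hn scaler_suml.
  rewrite Sm_sum; apply: eq_bigr => a _.
  under Sm_ext => t _ do rewrite scaler_suml.
  rewrite Sm_sum; apply: eq_bigr => c _.
  rewrite /Y -Sm_scale; apply: Sm_ext => t _; rewrite scalerA; congr (_ *: _); ring.
rewrite -/(Y _).
transitivity (\sum_a \sum_c x (take k w) (rcons s a) *: (rho a *m rho c *m Y c)).
  rewrite (eq_bigr (fun m => \sum_a \sum_c x (take k w) (rcons s a) *: (cmul R a c m *: (rho m *m Y c)))); last first.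
    move=> m _; rewrite mulmx_sumr; apply: eq_bigr => a _; rewrite mulmx_sumr; apply: eq_bigr => c _.
    by rewrite -scalemxAr scalerA.
  rewrite exchange_big; apply: eq_bigr => a _; rewrite exchange_big; apply: eq_bigr => c _.
  rewrite -scaler_sumr; congr (_ *: _).
  rewrite -sum_cmul_rho mulmx_suml; apply: eq_bigr => m _; by rewrite scalemxAl.
rewrite mulmx_suml; apply: eq_bigr => a _; rewrite mulmx_sumr; apply: eq_bigr => c _.
by rewrite -scalemxAr mulmx1 cats1 -scalemxAl mulmxA.
Qed.

Lemma Phi_amul x y w : Phi (amul x y) w =
  \sum_(k < (size w).+1) Phi x (take k w) *m Phi y (drop k w).
Proof.
rewrite {1}/Phi /amul.
under Sm_ext => b _ do rewrite scaler_suml.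
rewrite Sm_sum; apply: eq_bigr => k _.
by rewrite Phi_amul_k // -ltnS.
Qed.


Lemma Phi_aadd x y w : Phi (aadd x y) w = Phi x w + Phi y w.
Proof. by rewrite /Phi -Sm_add; apply: Sm_ext => b _; rewrite scalerDl. Qed.

Lemma Phi_ascale c x w : Phi (ascale c x) w = c *: Phi x w.
Proof. by rewrite /Phi -Sm_scale; apply: Sm_ext => b _; rewrite scalerA. Qed.

Lemma Phi_azero w : Phi (azero R) w = 0.
Proof. by rewrite /Phi -(Sm0 (size w).+1); apply: Sm_ext => b _; rewrite scale0r. Qed.

Definition nf (c : M4) (d : 'I_2 -> M4) (w : seq 'I_2) : M4 :=
  match w with [::] => c | [:: j] => d j | _ => 0 end.

Definition dR (j : 'I_2) : 'I_2 -> M4 := fun j' => (j' == j)%:R *: 1%:M.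
Definition d0 : 'I_2 -> M4 := fun _ => 0.

Lemma Phi_acl a w : Phi (acl R a) w = nf (rho a) d0 w.
Proof.
rewrite /Phi; case: w => [|j w].
  rewrite /= (bigD1 a) //= big1 ?addr0; first by rewrite /acl /= eqxx scale1r mulmx1.
  by move=> c Hc; rewrite /acl /= eqseq_cons andbT (negbTE Hc) scale0r mulmx0.
transitivity (Sm (size (j::w)).+1 (fun _ => 0)).
  by apply: Sm_ext => b _; rewrite /acl /= scale0r.
by rewrite Sm0; case: w.
Qed.

Lemma Phi_aR j w : Phi (aR R j) w = nf 0 (dR j) w.
Proof.
rewrite /Phi; case: w => [|j' [|j'' w]].
- transitivity (Sm 1 (fun _ => 0)); last by rewrite Sm0.
  by apply: Sm_ext => b _; rewrite /aR /= scale0r.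
- rewrite /= (bigD1 ord0) //=.
  rewrite [X in _ + X]big1 ?addr0; last first.
    move=> a Ha; rewrite big1 ?mulmx0 // => c _; rewrite /aR /=.
    by rewrite !eqseq_cons (negbTE Ha) /= andbF scale0r mulmx0.
  rewrite (bigD1 ord0) //= [X in _ + X]big1 ?addr0; last first.
    by move=> c Hc; rewrite /aR /= !eqseq_cons (negbTE Hc) !andbF scale0r mulmx0.
  rewrite /aR /dR /= !eqseq_cons !eqxx !andbT rho0 !mul1mx.
  by case: (j' == j).
- transitivity (Sm (size [:: j', j'' & w]).+1 (fun _ => 0)); last by rewrite Sm0.
  by apply: Sm_ext => b _; rewrite /aR /= eqseq_cons andbF scale0r.
Qed.


Lemma Phi_amul_nf x y c d c' d' :
  (forall w, Phi x w = nf c d w) -> (forall w, Phi y w = nf c' d' w) ->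
  (forall j j', d j *m d' j' = 0) ->
  forall w, Phi (amul x y) w = nf (c *m c') (fun j => c *m d' j + d j *m c') w.
Proof.
move=> Hx Hy H0 w; rewrite Phi_amul; case: w => [|j [|j' w]].
- by rewrite big_ord_recr big_ord0 /= add0r Hx Hy.
- by rewrite !big_ord_recr big_ord0 /= add0r !Hx !Hy.
- rewrite big1 // => -[[|[|k]] Hk] _ /=; rewrite Hx Hy /=.
  + by rewrite mulmx0.
  + by case: w Hk => [|? ?] _ /=; rewrite ?H0 ?mulmx0.
  + by rewrite mul0mx.
Qed.

Definition e3 : 'I_4 := @Ordinal 4 3 isT.
Definition qm (a b c d : R) : M4 := a *: 1%:M + b *: rho e1 + c *: rho e2 + d *: rho e3.

Ltac entries := apply/matrixP; apply: ord4P; apply: ord4P;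
  rewrite !mxE ?big_ord_recr ?big_ord0 /= ?mxE /cmul /cl_sign /=; ring.

Lemma qm_mul a b c d a' b' c' d' : qm a b c d *m qm a' b' c' d' =
  qm (a*a' - b*b' - c*c' - d*d') (a*b' + b*a' + c*d' - d*c')
     (a*c' - b*d' + c*a' + d*b') (a*d' + b*c' - c*b' + d*a').
Proof. entries. Qed.


Lemma qm_add a b c d a' b' c' d' : qm a b c d + qm a' b' c' d' =
  qm (a + a') (b + b') (c + c') (d + d').
Proof. entries. Qed.

Lemma qm_scale r a b c d : r *: qm a b c d = qm (r * a) (r * b) (r * c) (r * d).
Proof. entries. Qed.

Lemma qm_opp a b c d : - qm a b c d = qm (- a) (- b) (- c) (- d).
Proof. entries. Qed.

Lemma q_one : (1%:M : M4) = qm 1 0 0 0.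
Proof. entries. Qed.

Lemma q_zero : (0 : M4) = qm 0 0 0 0.
Proof. entries. Qed.

Lemma q_rho1 : rho e1 = qm 0 1 0 0.
Proof. entries. Qed.

Lemma q_rho2 : rho e2 = qm 0 0 1 0.
Proof. entries. Qed.

Lemma q_rho3 : rho e3 = qm 0 0 0 1.
Proof. entries. Qed.

Lemma qm_eq a b c d a' b' c' d' : a = a' -> b = b' -> c = c' -> d = d' ->
  qm a b c d = qm a' b' c' d'.
Proof. by move=> -> -> -> ->. Qed.

Lemma qm_entry00 a b c d : qm a b c d ord0 ord0 = a.
Proof. rewrite !mxE /cmul /cl_sign /=. ring. Qed.


Record qt := QT { t0 : R; t1 : R; t2 : R; t3 : R }.
Definition qmq (x : qt) : M4 := qm (t0 x) (t1 x) (t2 x) (t3 x).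
Definition qt0 := QT 0 0 0 0.
Definition qt1 := QT 1 0 0 0.
Definition qtadd (x y : qt) := QT (t0 x + t0 y) (t1 x + t1 y) (t2 x + t2 y) (t3 x + t3 y).
Definition qtscale (r : R) (x : qt) := QT (r * t0 x) (r * t1 x) (r * t2 x) (r * t3 x).
Definition qtmul (x y : qt) :=
  let: QT a b c d := x in let: QT a' b' c' d' := y in
  QT (a*a' - b*b' - c*c' - d*d') (a*b' + b*a' + c*d' - d*c')
     (a*c' - b*d' + c*a' + d*b') (a*d' + b*c' - c*b' + d*a').

Lemma qmq_mul x y : qmq (qtmul x y) = qmq x *m qmq y.
Proof. by case: x => a b c d; case: y => a' b' c' d'; rewrite /qmq qm_mul. Qed.
Lemma qmq_add x y : qmq (qtadd x y) = qmq x + qmq y.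
Proof. by rewrite /qmq qm_add. Qed.
Lemma qmq_scale r x : qmq (qtscale r x) = r *: qmq x.
Proof. by rewrite /qmq qm_scale. Qed.
Lemma qmq0 : qmq qt0 = 0.
Proof. by rewrite /qmq q_zero. Qed.
Lemma qmq1 : qmq qt1 = 1%:M.
Proof. by rewrite /qmq q_one. Qed.
Lemma qt_eq a b c d a' b' c' d' : a = a' -> b = b' -> c = c' -> d = d' ->
  QT a b c d = QT a' b' c' d'.
Proof. by move=> -> -> -> ->. Qed.

End P1.

Lemma ord2P (P : 'I_2 -> Prop) : P (@Ordinal 2 0 isT) -> P (@Ordinal 2 1 isT) -> forall a, P a.
Proof.
move=> H0 H1 [m Hm].
do 2 (case: m Hm => [|m] Hm; first by rewrite (bool_irrelevance Hm isT)).
by [].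
Qed.

Lemma ord8P (P : 'I_8 -> Prop) : P (@Ordinal 8 0 isT) -> P (@Ordinal 8 1 isT) ->
  P (@Ordinal 8 2 isT) -> P (@Ordinal 8 3 isT) -> P (@Ordinal 8 4 isT) ->
  P (@Ordinal 8 5 isT) -> P (@Ordinal 8 6 isT) -> P (@Ordinal 8 7 isT) -> forall a, P a.
Proof.
move=> H0 H1 H2 H3 H4 H5 H6 H7 [m Hm].
do 8 (case: m Hm => [|m] Hm; first by rewrite (bool_irrelevance Hm isT)).
by [].
Qed.


Definition rq := (rat * rat * rat * rat)%type.
Definition rq0 : rq := (0, 0, 0, 0).
Definition rq1 : rq := (1, 0, 0, 0).
Definition rqadd (x y : rq) : rq :=
  let: (a, b, c, d) := x in let: (a', b', c', d') := y in (a + a', b + b', c + c', d + d').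
Definition rqscale (r : rat) (x : rq) : rq :=
  let: (a, b, c, d) := x in (r * a, r * b, r * c, r * d).
Definition rqmul (x y : rq) : rq :=
  let: (a, b, c, d) := x in let: (a', b', c', d') := y in
  (a*a' - b*b' - c*c' - d*d', a*b' + b*a' + c*d' - d*c',
   a*c' - b*d' + c*a' + d*b', a*d' + b*c' - c*b' + d*a').

Record quad := Quad { qc1 : rq; qd1 : 'I_2 -> rq; qc2 : rq; qd2 : 'I_2 -> rq }.

Definition qadd X Y := Quad (rqadd (qc1 X) (qc1 Y)) (fun j => rqadd (qd1 X j) (qd1 Y j))
  (rqadd (qc2 X) (qc2 Y)) (fun j => rqadd (qd2 X j) (qd2 Y j)).
Definition qscale (r : rat) X := Quad (rqscale r (qc1 X)) (fun j => rqscale r (qd1 X j))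
  (rqscale r (qc2 X)) (fun j => rqscale r (qd2 X j)).
Definition qmul X Y := Quad (rqmul (qc1 X) (qc1 Y))
   (fun j => rqadd (rqmul (qc1 X) (qd1 Y j)) (rqmul (qd1 X j) (qc1 Y)))
   (rqadd (rqmul (qc1 X) (qc2 Y)) (rqmul (qc2 X) (qc1 Y)))
   (fun j => rqadd (rqadd (rqmul (qc1 X) (qd2 Y j)) (rqmul (qd1 X j) (qc2 Y)))
                   (rqadd (rqmul (qc2 X) (qd1 Y j)) (rqmul (qd2 X j) (qc1 Y)))).

Definition qtb (a : 'I_4) : rq :=
  (if eqn a 0 then 1 else 0, if eqn a 1 then 1 else 0,
   if eqn a 2 then 1 else 0, if eqn a 3 then 1 else 0).
Definition qdR (j j' : 'I_2) : rq := (if eqn j' j then 1 else 0, 0, 0, 0).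

Definition chq (k : 'I_8) (j : 'I_2) : rq :=
  if eqn k 1 && eqn j 0 then (0, -1, 0, 0)
  else if eqn k 6 && eqn j 1 then (0, 0, -1, 0) else rq0.
Definition dhq (k : 'I_8) (j : 'I_2) : rq :=
  if eqn k 1 then (if eqn j 0 then (0, 0, -1, 0) else (0, -1, 0, 0))
  else if eqn k 6 then (if eqn j 0 then (0, 0, 1, 0) else (0, 1, 0, 0)) else rq0.

Section P2.
Variable R : realFieldType.
Local Notation M4 := 'M[R]_4.
Local Notation rr := (@ratr R).

Definition qmr (x : rq) : M4 := let: (a, b, c, d) := x in qm (rr a) (rr b) (rr c) (rr d).

Lemma qmr_mul x y : qmr (rqmul x y) = qmr x *m qmr y.
Proof.
destruct x as [[[a b] c] d]; destruct y as [[[a' b'] c'] d'].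
by rewrite /= qm_mul !(rmorphD, rmorphB, rmorphN, rmorphM).
Qed.
Lemma qmr_add x y : qmr (rqadd x y) = qmr x + qmr y.
Proof.
destruct x as [[[a b] c] d]; destruct y as [[[a' b'] c'] d'].
by rewrite /= qm_add !rmorphD.
Qed.
Lemma qmr_scale r x : qmr (rqscale r x) = rr r *: qmr x.
Proof. destruct x as [[[a b] c] d]; by rewrite /= qm_scale !rmorphM. Qed.
Lemma qmr0 : qmr rq0 = 0.
Proof. by rewrite /= rmorph0 q_zero. Qed.
Lemma qmr1 : qmr rq1 = 1%:M.
Proof. by rewrite /= rmorph0 rmorph1 q_one. Qed.

Definition img (x : dual R) (X : quad) :=
  (forall w, Phi x.1 w = nf (qmr (qc1 X)) (fun j => qmr (qd1 X j)) w) /\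
  (forall w, Phi x.2 w = nf (qmr (qc2 X)) (fun j => qmr (qd2 X j)) w).

Lemma nf_ext (c c' : M4) d d' : c = c' -> (forall j, d j = d' j) -> forall w, nf c d w = nf c' d' w.
Proof. by move=> -> H [|j [|? ?]] //=. Qed.

Lemma img_ext x X Y : img x X -> qc1 X = qc1 Y -> (forall j, qd1 X j = qd1 Y j) ->
  qc2 X = qc2 Y -> (forall j, qd2 X j = qd2 Y j) -> img x Y.
Proof.
move=> [H1 H2] E1 F1 E2 F2; split=> w; [rewrite H1 | rewrite H2]; apply: nf_ext => //.
- by rewrite E1.
- by move=> j; rewrite F1.
- by rewrite E2.
- by move=> j; rewrite F2.
Qed.

Lemma nf_add (c c' : M4) d d' w : nf c d w + nf c' d' w = nf (c + c') (fun j => d j + d' j) w.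
Proof. by case: w => [|j [|? ?]] //=; rewrite addr0. Qed.
Lemma nf_scale r (c : M4) d w : r *: nf c d w = nf (r *: c) (fun j => r *: d j) w.
Proof. by case: w => [|j [|? ?]] //=; rewrite scaler0. Qed.

Lemma img_add x y X Y : img x X -> img y Y -> img (dadd x y) (qadd X Y).
Proof.
move=> [Hx1 Hx2] [Hy1 Hy2]; split=> w /=; rewrite Phi_aadd ?Hx1 ?Hy1 ?Hx2 ?Hy2 nf_add;
  apply: nf_ext => *; by rewrite qmr_add.
Qed.

Lemma img_scale_r (c : R) r x X : c = rr r -> img x X -> img (dscale c x) (qscale r X).
Proof.
move=> -> [Hx1 Hx2]; split=> w /=; rewrite Phi_ascale ?Hx1 ?Hx2 nf_scale;
  apply: nf_ext => *; by rewrite qmr_scale.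
Qed.

Lemma img_half x X : img x X -> img (dscale (1 / 2) x) (qscale (1 / 2) X).
Proof. apply: img_scale_r; by rewrite fmorph_div rmorph1 rmorph_nat. Qed.
Lemma img_m1 x X : img x X -> img (dscale (-1) x) (qscale (-1) X).
Proof. apply: img_scale_r; by rewrite rmorphN rmorph1. Qed.
Lemma img_one x X : img x X -> img (dscale 1 x) (qscale 1 X).
Proof. apply: img_scale_r; by rewrite rmorph1. Qed.

Lemma img_mul x y X Y : img x X -> img y Y ->
  (forall j j', rqmul (qd1 X j) (qd1 Y j') = rq0) ->
  (forall j j', rqmul (qd1 X j) (qd2 Y j') = rq0) ->
  (forall j j', rqmul (qd2 X j) (qd1 Y j') = rq0) -> img (dmul x y) (qmul X Y).
Proof.
move=> [Hx1 Hx2] [Hy1 Hy2] S1 S2 S3; split=> w /=.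
  rewrite (Phi_amul_nf Hx1 Hy1); last by move=> j j'; rewrite -qmr_mul S1 qmr0.
  by apply: nf_ext => *; rewrite ?qmr_add !qmr_mul.
rewrite Phi_aadd (Phi_amul_nf Hx1 Hy2); last by move=> j j'; rewrite -qmr_mul S2 qmr0.
rewrite (Phi_amul_nf Hx2 Hy1); last by move=> j j'; rewrite -qmr_mul S3 qmr0.
by rewrite nf_add; apply: nf_ext => *; rewrite ?qmr_add !qmr_mul.
Qed.

Lemma rho_qtb a : rho R a = qmr (qtb a).
Proof.
move: a; apply: ord4P; rewrite /qtb /= ?rmorph0 ?rmorph1.
- by rewrite (_ : Ordinal _ = ord0) ?rho0 ?q_one //; apply: val_inj.
- by rewrite q_rho1.
- by rewrite q_rho2.
- by rewrite q_rho3.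
Qed.

Lemma img_acl a : img (demb (acl R a)) (Quad (qtb a) (fun _ => rq0) rq0 (fun _ => rq0)).
Proof.
split=> w; cbn [fst snd demb qc1 qd1 qc2 qd2].
  by rewrite Phi_acl; apply: nf_ext => *; rewrite ?rho_qtb /d0 ?qmr0.
by rewrite Phi_azero qmr0; case: w => [|? [|? ?]].
Qed.

Lemma img_aR j : img (demb (aR R j)) (Quad rq0 (qdR j) rq0 (fun _ => rq0)).
Proof.
split=> w; cbn [fst snd demb qc1 qd1 qc2 qd2].
  rewrite Phi_aR; apply: nf_ext => [|j']; first by rewrite qmr0.
  rewrite /dR /qdR /=.
  have -> : (j' == j) = eqn j' j by [].
  case: (eqn j' j); rewrite ?scale1r ?scale0r !rmorph0 ?rmorph1.
    exact: q_one.
  exact: q_zero.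
by rewrite Phi_azero qmr0; case: w => [|? [|? ?]].
Qed.

Lemma img_dt : img (dt R) (Quad rq0 (fun _ => rq0) rq1 (fun _ => rq0)).
Proof.
split=> w; cbn [fst snd dt qc1 qd1 qc2 qd2].
  by rewrite Phi_azero qmr0; case: w => [|? [|? ?]].
by rewrite Phi_acl rho0 -qmr1; apply: nf_ext => // j; rewrite /d0 qmr0.
Qed.

End P2.

Ltac isolve :=
  lazymatch goal with
  | |- img (dadd _ _) _ => eapply img_add; [isolve | isolve]
  | |- img (dscale _ _) _ => first [apply: img_half | apply: img_m1 | apply: img_one]; isolve
  | |- img (dopp _) _ => unfold dopp; isolve
  | |- img (dsub _ _) _ => unfold dsub; isolve
  | |- img (dmul _ _) _ => eapply img_mul; [isolve | isolve | idtac | idtac | idtac]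
  | |- img (demb (acl _ _)) _ => apply: img_acl
  | |- img (demb (aR _ _)) _ => apply: img_aR
  | |- img (dt _) _ => apply: img_dt
  end.

Ltac qfin := repeat (apply: ord2P); apply/eqP; vm_compute; reflexivity.

Section P3.
Variable R : realFieldType.

Lemma img_base k : img (split_var (bQ1 R) (bQ2 R) (bA1 R) (bA2 R) k)
  (Quad rq0 (chq k) rq0 (fun _ => rq0)).
Proof.
move: k; apply: ord8P;
(eapply img_ext;
 [unfold split_var, dpart, dinvQ, dopp, dsub, bA1, bA2, bQ1, bQ2; rewrite /=; isolve | ..];
 qfin).
Qed.

Lemma img_rot k : img (split_var (rot1 (bQ1 R) (bQ2 R)) (rot2 (bQ1 R) (bQ2 R))
   (rot1 (bA1 R) (bA2 R)) (rot2 (bA1 R) (bA2 R)) k)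
  (Quad rq0 (chq k) rq0 (dhq k)).
Proof.
move: k; apply: ord8P;
(eapply img_ext;
 [unfold split_var, dpart, dinvQ, dopp, dsub, bA1, bA2, bQ1, bQ2, rot1, rot2; rewrite /=; isolve | ..];
 qfin).
Qed.

End P3.

Section P4.
Variable R : realFieldType.
Local Notation M4 := 'M[R]_4.

Lemma Phi_amul_deg1 Z Y (d : 'I_2 -> M4) : (forall w, Phi Z w = nf 0 d w) ->
  forall w, Phi (amul Z Y) w = if w is j :: w' then d j *m Phi Y w' else 0.
Proof.
move=> HZ w; rewrite Phi_amul; case: w => [|j w].
  by rewrite big_ord_recl big_ord0 HZ /= mul0mx addr0.
rewrite big_ord_recl HZ /= mul0mx add0r big_ord_recl HZ /=.
case: w => [|x w]; first by rewrite big_ord0 addr0.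
rewrite big1 ?addr0 // => i _; by rewrite HZ /= mul0mx.
Qed.

Lemma Phi_amul_const_r x z (M : M4) : (forall w, Phi z w = nf M (d0 R) w) ->
  forall w, Phi (amul x z) w = Phi x w *m M.
Proof.
move=> Hz w; rewrite Phi_amul big_ord_recr /= Hz take_size drop_size /=.
rewrite big1 ?add0r // => i _; rewrite Hz.
have : (i < size w)%N := ltn_ord i.
case: (drop i w) (size_drop i w) => [|j [|? ?]] /= Hs Hi.
- by move: Hs => /esym/eqP; rewrite subn_eq0 leqNgt Hi.
- by rewrite /d0 mulmx0.
- by rewrite mulmx0.
Qed.

Lemma Phi_amul_const_l x z (M : M4) : (forall w, Phi z w = nf M (d0 R) w) ->
  forall w, Phi (amul z x) w = M *m Phi x w.
Proof.
move=> Hz w; rewrite Phi_amul big_ord_recl /= Hz take0 drop0 /=.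
rewrite big1 ?addr0 // => i _; rewrite Hz; move: i.
case: w => [|a w] [i Hi] //=.
by rewrite add0n; case: (take i w) => [|? ?] /=; rewrite /d0 mul0mx.
Qed.

Definition chm k j : M4 := qmr R (chq k j).

Fixpoint Cm (u : seq 'I_8) (w : seq 'I_2) : M4 :=
  match u, w with
  | [::], [::] => 1%:M
  | k :: u', j :: w' => chm k j *m Cm u' w'
  | _, _ => 0 end.

Fixpoint Dm (dm : 'I_8 -> 'I_2 -> M4) (u : seq 'I_8) (w : seq 'I_2) : M4 :=
  match u, w with
  | k :: u', j :: w' => chm k j *m Dm dm u' w' + dm k j *m Cm u' w'
  | _, _ => 0 end.

Lemma Phi_dprod (y : 'I_8 -> dual R) (dd : 'I_8 -> 'I_2 -> rq) :
  (forall k, img (y k) (Quad rq0 (chq k) rq0 (dd k))) ->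
  forall u w, Phi (dprod (map y u)).1 w = Cm u w /\
              Phi (dprod (map y u)).2 w = Dm (fun k j => qmr R (dd k j)) u w.
Proof.
move=> Hy; elim=> [|k u IH] w.
  rewrite /dprod /= /done /demb /=; split; last by rewrite Phi_azero; case: w.
  by rewrite Phi_acl rho0; case: w => [|? [|? ?]].
have [H1 H2] := Hy k.
have H1' : forall w, Phi (y k).1 w = nf 0 (fun j => qmr R (chq k j)) w.
  by move=> w'; rewrite H1 qmr0.
have H2' : forall w, Phi (y k).2 w = nf 0 (fun j => qmr R (dd k j)) w.
  by move=> w'; rewrite H2 qmr0.
split; rewrite /=.
  rewrite (Phi_amul_deg1 _ H1'); case: w => [|j w] //=.
  by rewrite (IH w).1.
rewrite Phi_aadd (Phi_amul_deg1 _ H1') (Phi_amul_deg1 _ H2').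
case: w => [|j w] /=; first by rewrite addr0.
by rewrite (IH w).1 (IH w).2.
Qed.

Lemma Cm_size u w : size u != size w -> Cm u w = 0.
Proof.
elim: u w => [|k u IH] [|j w] //= H.
by rewrite IH ?mulmx0.
Qed.

Lemma Dm_size dm u w : size u != size w -> Dm dm u w = 0.
Proof.
elim: u w => [|k u IH] [|j w] //= H.
by rewrite IH ?Cm_size ?mulmx0 ?addr0.
Qed.

Lemma Phi_eval1 (f : series R) (y : 'I_8 -> dual R) w : Phi (eval f y).1 w =
  \sum_(k < (size w).+1) \sum_(u : k.-tuple 'I_8) f u *: Phi (dprod (map y u)).1 w.
Proof.
rewrite {1}/Phi /eval; cbn [fst snd].
under Sm_ext => b _ do rewrite scaler_suml.
rewrite Sm_sum; apply: eq_bigr => k _.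
under Sm_ext => b _ do rewrite scaler_suml.
rewrite Sm_sum; apply: eq_bigr => u _.
by rewrite /Phi -Sm_scale; apply: Sm_ext => b _; rewrite scalerA.
Qed.

Lemma Phi_eval2 (f : series R) (y : 'I_8 -> dual R) w : Phi (eval f y).2 w =
  \sum_(k < (size w).+1) \sum_(u : k.-tuple 'I_8) f u *: Phi (dprod (map y u)).2 w.
Proof.
rewrite {1}/Phi /eval; cbn [fst snd].
under Sm_ext => b _ do rewrite scaler_suml.
rewrite Sm_sum; apply: eq_bigr => k _.
under Sm_ext => b _ do rewrite scaler_suml.
rewrite Sm_sum; apply: eq_bigr => u _.
by rewrite /Phi -Sm_scale; apply: Sm_ext => b _; rewrite scalerA.
Qed.

Lemma sum_tuple_size (F : seq 'I_8 -> M4) n (w : seq 'I_2) : size w = n ->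
  (forall u, size u != size w -> F u = 0) ->
  \sum_(k < (size w).+1) \sum_(u : k.-tuple 'I_8) F u = \sum_(u : n.-tuple 'I_8) F u.
Proof.
move=> Hw HF; rewrite Hw big_ord_recr /= big1 ?add0r // => k _.
rewrite big1 // => u _; apply: HF; rewrite size_tuple Hw.
by rewrite neq_ltn ltn_ord.
Qed.

End P4.

Definition Qq (j : 'I_2) : rq := if eqn j 0 then (0, 1, 0, 0) else (0, 0, 1, 0).
Definition Jq : rq := (0, 0, 0, 1).
Definition epsq (i j : 'I_2) : rat := if eqn i 0 && eqn j 1 then -1 else 1.
Definition sgq (k : 'I_8) (j : 'I_2) : rat :=
  if eqn j 0 then (if eqn k 1 then 1 else 0) else (if eqn k 6 then 1 else 0).
Definition gmq (k : 'I_8) (j : 'I_2) : rat :=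
  (if eqn j 0 then (if eqn k 6 then 1 else 0) else (if eqn k 1 then 1 else 0)) - sgq k j.
Definition rtq (k : 'I_8) (i : 'I_2) : rat :=
  if eqn k 1 then 1 else if eqn k 6 then (if eqn i 0 then -1 else 1) else 0.

Fixpoint ccz (it : seq 'I_2) : int :=
  if it is i :: it' then ccz it' + (if eqn i 0 then - 2 * (-1) ^+ size it' else 0) else 0.

Ltac rqeq := apply/eqP; vm_compute; reflexivity.

Section P5.
Variable R : realFieldType.
Local Notation M4 := 'M[R]_4.
Local Notation rr := (@ratr R).

Definition Qm j : M4 := qmr R (Qq j).
Definition Jm : M4 := qmr R Jq.
Definition dhm k j : M4 := qmr R (dhq k j).

Lemma F1 k j : Qm j *m chm R k j = rr (sgq k j) *: 1%:M.
Proof.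
rewrite /Qm /chm -qmr_mul -qmr1 -qmr_scale; congr (qmr R _).
by move: k j; apply: ord8P; apply: ord2P; rqeq.
Qed.

Lemma F2 k j : Qm j *m dhm k j = rr (gmq k j) *: Jm.
Proof.
rewrite /Qm /dhm /Jm -qmr_mul -qmr_scale; congr (qmr R _).
by move: k j; apply: ord8P; apply: ord2P; rqeq.
Qed.

Lemma FJ j : Qm j *m Jm = - (Jm *m Qm j).
Proof.
rewrite /Qm /Jm -!qmr_mul.
have -> : - qmr R (rqmul Jq (Qq j)) = qmr R (rqscale (-1) (rqmul Jq (Qq j))).
  by rewrite qmr_scale rmorphN1 scaleN1r.
congr (qmr R _).
by move: j; apply: ord2P; rqeq.
Qed.

Lemma rt_val k i : r_of_tilde R k (letter8 i) = rr (rtq k i).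
Proof.
move: k i; apply: ord8P; apply: ord2P;
rewrite /r_of_tilde !big_ord_recr big_ord0 /= /r_of_hat /hat_of_tilde /mat8 /rtq /=
  ?rmorph0 ?rmorph1 ?rmorphN ?rmorph1; ring.
Qed.

Lemma F3 k i : \sum_j rr (epsq i j) * rr (sgq k j) = r_of_tilde R k (letter8 i).
Proof.
rewrite rt_val.
have -> : \sum_j rr (epsq i j) * rr (sgq k j) = rr (\sum_j epsq i j * sgq k j).
  by rewrite rmorph_sum; apply: eq_bigr => j _; rewrite rmorphM.
congr (rr _).
by move: k i; apply: ord8P; apply: ord2P; rewrite !big_ord_recr big_ord0 /=; rqeq.
Qed.


Lemma F4 k i : \sum_j rr (epsq i j) * rr (gmq k j) =
   -2 * (if eqn i 0 then 1 else 0) * r_of_tilde R k (letter8 i).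
Proof.
rewrite rt_val.
have -> : \sum_j rr (epsq i j) * rr (gmq k j) = rr (\sum_j epsq i j * gmq k j).
  by rewrite rmorph_sum; apply: eq_bigr => j _; rewrite rmorphM.
have -> : -2 * (if eqn i 0 then 1 else 0) * rr (rtq k i) =
   rr (-2 * (if eqn i 0 then 1 else 0) * rtq k i).
  by rewrite !rmorphM rmorphN (rmorph_nat (@ratr R) 2); case: (eqn i 0); rewrite ?rmorph1 ?rmorph0.
congr (rr _).
by move: k i; apply: ord8P; apply: ord2P; rewrite !big_ord_recr big_ord0 /=; rqeq.
Qed.

End P5.

Section P6.
Variable R : realFieldType.
Local Notation M4 := 'M[R]_4.
Local Notation rr := (@ratr R).

Fixpoint Lam (it : seq 'I_2) (Z : seq 'I_2 -> M4) : M4 :=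
  if it is i :: it' then \sum_(j : 'I_2) rr (epsq i j) *: Lam it' (fun w => Qm R j *m Z (j :: w))
  else Z [::].

Lemma Lam_ext it Z Z' : (forall w, size w = size it -> Z w = Z' w) -> Lam it Z = Lam it Z'.
Proof.
elim: it Z Z' => [|i it IH] Z Z' H /=; first exact: H.
apply: eq_bigr => j _; congr (_ *: _); apply: IH => w Hw; congr (_ *m _).
by apply: H; rewrite /= Hw.
Qed.

Lemma Lam_sum it (I : Type) (r : seq I) (P : pred I) (F : I -> seq 'I_2 -> M4) :
  Lam it (fun w => \sum_(x <- r | P x) F x w) = \sum_(x <- r | P x) Lam it (F x).
Proof.
elim: it F => [|i it IH] F //=.
transitivity (\sum_j \sum_(x <- r | P x) rr (epsq i j) *: Lam it (fun w => Qm R j *m F x (j :: w))).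
  apply: eq_bigr => j _; rewrite -scaler_sumr -IH; congr (_ *: _).
  by apply: Lam_ext => w _; rewrite mulmx_sumr.
by rewrite exchange_big.
Qed.

Lemma Lam_scale it c Z : Lam it (fun w => c *: Z w) = c *: Lam it Z.
Proof.
elim: it Z => [|i it IH] Z //=.
rewrite scaler_sumr; apply: eq_bigr => j _.
rewrite (Lam_ext (Z' := fun w => c *: (Qm R j *m Z (j :: w)))); last by move=> w _; rewrite scalemxAr.
by rewrite IH !scalerA mulrC.
Qed.

Lemma Lam_add it Z Z' : Lam it (fun w => Z w + Z' w) = Lam it Z + Lam it Z'.
Proof.
elim: it Z Z' => [|i it IH] Z Z' //=.
rewrite -big_split; apply: eq_bigr => j _ /=.
rewrite -scalerDr -IH; congr (_ *: _).
by apply: Lam_ext => w _; rewrite mulmxDr.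
Qed.

Lemma Lam_mulr it Z M : Lam it (fun w => Z w *m M) = Lam it Z *m M.
Proof.
elim: it Z => [|i it IH] Z //=.
rewrite mulmx_suml; apply: eq_bigr => j _.
rewrite -scalemxAl -IH; congr (_ *: _).
by apply: Lam_ext => w _; rewrite mulmxA.
Qed.

Lemma Lam0 it : Lam it (fun _ => 0) = 0.
Proof.
rewrite -[RHS](scale0r (Lam it (fun _ => 0))) -Lam_scale.
by apply: Lam_ext => w _; rewrite scale0r.
Qed.

Lemma Lam_J it Z : Lam it (fun w => Jm R *m Z w) = (-1) ^+ size it *: (Jm R *m Lam it Z).
Proof.
elim: it Z => [|i it IH] Z /=; first by rewrite scale1r.
rewrite mulmx_sumr scaler_sumr; apply: eq_bigr => j _.
transitivity (rr (epsq i j) *: Lam it (fun w => (-1) *: (Jm R *m (Qm R j *m Z (j :: w))))).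
  congr (_ *: _); apply: Lam_ext => w _.
  by rewrite mulmxA FJ mulNmx scaleN1r mulmxA.
rewrite Lam_scale IH -scalemxAr !scalerA exprS; congr (_ *: _); ring.
Qed.

Definition aa (u : seq 'I_8) (it : seq 'I_2) : R :=
  \prod_(j < size (map letter8 it)) r_of_tilde R (nth ord0 u j) (nth ord0 (map letter8 it) j).

Lemma aa_nil u : aa u [::] = 1.
Proof. by rewrite /aa big_ord0. Qed.

Lemma aa_cons k u i it : aa (k :: u) (i :: it) = r_of_tilde R k (letter8 i) * aa u it.
Proof. by rewrite /aa /= big_ord_recl. Qed.

Lemma Lam_C it u : Lam it (Cm R u) = if size u == size it then aa u it *: 1%:M else 0.
Proof.
elim: it u => [|i it IH] [|k u] //=.
- by rewrite aa_nil scale1r.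
- rewrite big1 // => j _.
  by rewrite (Lam_ext (Z' := fun _ => 0)) ?Lam0 ?scaler0 // => w _ /=; rewrite mulmx0.
- transitivity (\sum_j rr (epsq i j) *: (rr (sgq k j) *: Lam it (Cm R u))).
    apply: eq_bigr => j _; congr (_ *: _); rewrite -Lam_scale; apply: Lam_ext => w _.
    by rewrite mulmxA F1 -scalemxAl mul1mx.
  rewrite IH eqSS; case: (size u == size it); last by rewrite big1 // => j _; rewrite !scaler0.
  under eq_bigr do rewrite !scalerA.
  by rewrite -scaler_suml -big_distrl /= F3 aa_cons.
Qed.

Lemma Lam_D it u : Lam it (Dm (dhm R) u) =
  if size u == size it then ((ccz it)%:~R * aa u it) *: Jm R else 0.
Proof.
elim: it u => [|i it IH] [|k u] /=.
- by rewrite mul0r scale0r.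
- by [].
- rewrite big1 // => j _.
  by rewrite (Lam_ext (Z' := fun _ => 0)) ?Lam0 ?scaler0 // => w _ /=; rewrite mulmx0.
- transitivity (\sum_j rr (epsq i j) *: (rr (sgq k j) *: Lam it (Dm (dhm R) u)
     + rr (gmq k j) *: Lam it (fun w => Jm R *m Cm R u w))).
    apply: eq_bigr => j _; congr (_ *: _); rewrite -!Lam_scale -Lam_add; apply: Lam_ext => w _.
    by rewrite mulmxDr !mulmxA F1 F2 -!scalemxAl mul1mx.
  rewrite Lam_J IH Lam_C eqSS; case: (size u == size it); last first.
    by rewrite big1 // => j _; rewrite !mulmx0 !scaler0 addr0 scaler0.
  rewrite -scalemxAr mulmx1.
  under eq_bigr do rewrite scalerDr !scalerA -scalerDl.
  rewrite -scaler_suml; congr (_ *: _).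
  rewrite big_split /= -!big_distrl /= F3 F4 aa_cons.
  case: (eqn i 0); rewrite /= ?addr0 ?mulr0 ?mul0r; last by ring.
  rewrite rmorphD rmorphM rmorphXn rmorphN1 /=.
  ring.
Qed.

End P6.

Section P7.
Variable R : realFieldType.
Local Notation M4 := 'M[R]_4.
Local Notation rr := (@ratr R).

Lemma Dm_zero dm u w : (forall k j, dm k j = 0) -> Dm (R:=R) dm u w = 0.
Proof.
move=> H; elim: u w => [|k u IH] [|j w] //=.
by rewrite IH H mulmx0 mul0mx addr0.
Qed.

Definition Cf (f : series R) N w : M4 := \sum_(u : N.-tuple 'I_8) f u *: Cm R u w.
Definition Df (f : series R) N w : M4 := \sum_(u : N.-tuple 'I_8) f u *: Dm (dhm R) u w.

Lemma Phi_E (f : series R) (y : 'I_8 -> dual R) (dd : 'I_8 -> 'I_2 -> rq) N w :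
  (forall k, img (y k) (Quad rq0 (chq k) rq0 (dd k))) -> size w = N ->
  Phi (eval f y).1 w = Cf f N w /\
  Phi (eval f y).2 w = \sum_(u : N.-tuple 'I_8) f u *: Dm (fun k j => qmr R (dd k j)) u w.
Proof.
move=> Hy Hw; split.
  rewrite Phi_eval1.
  transitivity (\sum_(k < (size w).+1) \sum_(u : k.-tuple 'I_8) (fun s : seq 'I_8 => f s *: Cm R s w) u).
    apply: eq_bigr => k _; apply: eq_bigr => u _; by rewrite (Phi_dprod Hy u w).1.
  apply: (sum_tuple_size (F := fun s => f s *: Cm R s w)) => // u Hu.
  by rewrite Cm_size ?scaler0.
rewrite Phi_eval2.
transitivity (\sum_(k < (size w).+1) \sum_(u : k.-tuple 'I_8)
   (fun s : seq 'I_8 => f s *: Dm (fun k j => qmr R (dd k j)) s w) u).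
  apply: eq_bigr => k _; apply: eq_bigr => u _; by rewrite (Phi_dprod Hy u w).2.
apply: (sum_tuple_size (F := fun s => f s *: Dm (fun k j => qmr R (dd k j)) s w)) => // u Hu.
by rewrite Dm_size ?scaler0.
Qed.

Definition rB := split_var (bQ1 R) (bQ2 R) (bA1 R) (bA2 R).
Definition rT := split_var (rot1 (bQ1 R) (bQ2 R)) (rot2 (bQ1 R) (bQ2 R))
   (rot1 (bA1 R) (bA2 R)) (rot2 (bA1 R) (bA2 R)).

Lemma Phi_EB (f : series R) N w : size w = N ->
  Phi (eval f rB).1 w = Cf f N w /\ Phi (eval f rB).2 w = 0.
Proof.
move=> Hw; have [-> ->] := Phi_E f (dd := fun _ _ => rq0) (@img_base R) Hw; split => //.
by rewrite big1 // => u _; rewrite Dm_zero ?scaler0 // => k j; rewrite qmr0.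
Qed.

Lemma Phi_ET (f : series R) N w : size w = N ->
  Phi (eval f rT).1 w = Cf f N w /\ Phi (eval f rT).2 w = Df f N w.
Proof. by move=> Hw; have [-> ->] := Phi_E f (@img_rot R) Hw. Qed.

Lemma Lam_Cf (f : series R) it :
  Lam it (Cf f (size (map letter8 it))) = ptilde f (map letter8 it) *: 1%:M.
Proof.
rewrite /Cf Lam_sum /ptilde scaler_suml; apply: eq_bigr => u _.
rewrite Lam_scale Lam_C.
have -> : size u == size it by rewrite size_tuple size_map.
rewrite scalerA; congr ((_ * _) *: _).
by rewrite /aa; apply: eq_bigr => j _; rewrite (tnth_nth ord0).
Qed.

Lemma Lam_Df (f : series R) it :
  Lam it (Df f (size (map letter8 it))) =
  ((ccz it)%:~R * ptilde f (map letter8 it)) *: Jm R.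
Proof.
rewrite /Df Lam_sum /ptilde mulr_sumr scaler_suml; apply: eq_bigr => u _.
rewrite Lam_scale Lam_D.
have -> : size u == size it by rewrite size_tuple size_map.
rewrite scalerA; congr (_ *: _).
rewrite mulrCA; congr (_ * (_ * _)).
by rewrite /aa; apply: eq_bigr => j _; rewrite (tnth_nth ord0).
Qed.

Lemma img_bQ1 : img (bQ1 R) (Quad (0, 1, 0, 0) (fun _ => rq0) rq0 (fun _ => rq0)).
Proof. eapply img_ext; [rewrite /bQ1; isolve | ..]; qfin. Qed.
Lemma img_bQ2 : img (bQ2 R) (Quad (0, 0, 1, 0) (fun _ => rq0) rq0 (fun _ => rq0)).
Proof. eapply img_ext; [rewrite /bQ2; isolve | ..]; qfin. Qed.
Lemma img_Q1' : img (rot1 (bQ1 R) (bQ2 R)) (Quad (0, 1, 0, 0) (fun _ => rq0) (0, 0, 1, 0) (fun _ => rq0)).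
Proof. eapply img_ext; [rewrite /rot1 /bQ1 /bQ2; isolve | ..]; qfin. Qed.
Lemma img_Q2' : img (rot2 (bQ1 R) (bQ2 R)) (Quad (0, 0, 1, 0) (fun _ => rq0) (0, -1, 0, 0) (fun _ => rq0)).
Proof. eapply img_ext; [rewrite /rot2 /bQ1 /bQ2; isolve | ..]; qfin. Qed.

Lemma Phi_dmul_c (x q : dual R) c c' : img q (Quad c (fun _ => rq0) c' (fun _ => rq0)) ->
  (forall w, Phi (dmul x q).1 w = Phi x.1 w *m qmr R c) /\
  (forall w, Phi (dmul x q).2 w = Phi x.1 w *m qmr R c' + Phi x.2 w *m qmr R c).
Proof.
move=> [H1 H2].
have H1' : forall w, Phi q.1 w = nf (qmr R c) (d0 R) w.
  by move=> w; rewrite H1; apply: nf_ext => // j; rewrite qmr0.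
have H2' : forall w, Phi q.2 w = nf (qmr R c') (d0 R) w.
  by move=> w; rewrite H2; apply: nf_ext => // j; rewrite qmr0.
split=> w /=; first exact: Phi_amul_const_r.
by rewrite Phi_aadd !(Phi_amul_const_r _ H1') !(Phi_amul_const_r _ H2').
Qed.

Lemma Phi_rot1_2 (x1 x2 : dual R) w : Phi (rot1 x1 x2).2 w = Phi x1.2 w + Phi x2.1 w.
Proof.
have [H1 H2] := img_dt R.
have H1' : forall w, Phi (dt R).1 w = nf 0 (d0 R) w.
  by move=> w'; rewrite H1; apply: nf_ext => [|j]; rewrite qmr0.
have H2' : forall w, Phi (dt R).2 w = nf 1%:M (d0 R) w.
  by move=> w'; rewrite H2; apply: nf_ext => [|j]; rewrite ?qmr1 ?qmr0.
rewrite /rot1 /= Phi_aadd Phi_aadd (Phi_amul_const_l _ H1') (Phi_amul_const_l _ H2').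
by rewrite mul0mx add0r mul1mx.
Qed.

Lemma Phi_rot2_2 (x1 x2 : dual R) w : Phi (rot2 x1 x2).2 w = Phi x2.2 w - Phi x1.1 w.
Proof.
have [H1 H2] := img_dt R.
have H1' : forall w, Phi (dt R).1 w = nf 0 (d0 R) w.
  by move=> w'; rewrite H1; apply: nf_ext => [|j]; rewrite qmr0.
have H2' : forall w, Phi (dt R).2 w = nf 1%:M (d0 R) w.
  by move=> w'; rewrite H2; apply: nf_ext => [|j]; rewrite ?qmr1 ?qmr0.
rewrite /rot2 /dsub /dopp /= Phi_aadd Phi_ascale Phi_aadd.
rewrite (Phi_amul_const_l _ H1') (Phi_amul_const_l _ H2').
by rewrite mul0mx add0r mul1mx scaleN1r.
Qed.

End P7.

Definition ne2 (x y : 'I_2) := x != y.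

Lemma sgn_case (n : nat) : (-1) ^+ n = (if odd n then -1 else 1 : int).
Proof. by rewrite -signr_odd; case: (odd n); rewrite ?expr1 ?expr0. Qed.

Lemma ccz_red_step a acc : ccz (red_step a acc) = ccz (a :: acc) /\
  odd (size (red_step a acc)) = odd (size (a :: acc)).
Proof.
case: acc => [|b t] //=.
case: ifP => [/eqP <-|_] //=; split; last by rewrite negbK.
rewrite !sgn_case /=; case: (odd (size t)); case: (eqn a 0); rewrite /=; lia.
Qed.

Lemma ccz_red w : ccz (red w) = ccz w /\ odd (size (red w)) = odd (size w).
Proof.
elim: w => [|a w [IH1 IH2]] //=.
have [H1 H2] := ccz_red_step a (red w).
rewrite /red /= -/(red w) H1 H2 /= IH2; split => //.
by rewrite !sgn_case IH2 IH1.
Qed.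

Lemma red_alt w : sorted ne2 (red w).
Proof.
elim: w => [|a w IH] //=; rewrite -/(red w).
case: (red w) IH => [|b t] //= H.
case: ifP => [_|/negbT Hab] /=; first exact: path_sorted H.
by rewrite /ne2 Hab.
Qed.

Definition Dz (x : seq 'I_2) : int := (-1) ^+ size x * ccz x.

Lemma ord2_neq (a b : 'I_2) : a != b -> (eqn a 0 = ~~ eqn b 0).
Proof. by move: a b; apply: ord2P; apply: ord2P. Qed.

Lemma Dz_cons2 a b T : a != b ->
  Dz (a :: b :: T) = Dz T + (if eqn a 0 then 2 else -2).
Proof.
move=> /ord2_neq Hab; rewrite /Dz /= Hab !sgn_case /=.
case: (odd (size T)); case: (eqn b 0); rewrite /=; lia.
Qed.

Lemma Dz_formula n : forall a t, (size t <= n)%N -> sorted ne2 (a :: t) ->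
  Dz (a :: t) = if eqn a 0 then 2 * ((size t)./2 + 1)%:Z else - 2 * ((size t).+1./2)%:Z.
Proof.
elim: n => [|n IH] a [|b t] //=.
- by move=> _ _; rewrite /Dz /= expr1; case: (eqn a 0); lia.
- by move=> _ _; rewrite /Dz /= expr1; case: (eqn a 0); lia.
- case: t => [|c t] Hs /andP [Hab Hbt].
    rewrite /Dz /= !sgn_case /= (ord2_neq Hab); case: (eqn b 0); rewrite /=; lia.
  move: Hbt => /= /andP [Hbc Hct].
  have Hca : c = a.
    move: a b c Hab Hbc {Hs Hct IH}; apply: ord2P; apply: ord2P; apply: ord2P => //.
  rewrite Dz_cons2 // -Hca (IH c t) //; last by rewrite -ltnS (leq_trans _ Hs).
  rewrite Hca /=; case: (eqn a 0); lia.
Qed.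

Lemma ccz_Dz x : ccz x = (-1) ^+ size x * Dz x.
Proof. by rewrite /Dz mulrA -expr2 sqrr_sign mul1r. Qed.

Lemma alt_ccz x : sorted ne2 x ->
  ((x \notin [:: [::]; [:: letter2]]) -> ccz x != 0)%type /\
  ((x \notin [:: [::]; [:: letter2]; [:: letter1]; [:: letter2; letter1]]) -> ccz x != -2)%type.
Proof.
case: x => [|a t] Hs; first by split.
rewrite ccz_Dz (Dz_formula (leqnn (size t)) Hs) sgn_case.
move: Hs; case: t => [|b [|c [|d t]]] /=.
- by move=> _; move: a; apply: ord2P; split.
- move=> /andP [Hab _]; move: a b Hab; apply: ord2P; apply: ord2P => //= _;
    split => //= _; try lia.
- move=> _; case: (eqn a 0); rewrite /=; split => _; lia.
- move=> _; rewrite ?negbK; case: (odd (size t)); case: (eqn a 0); rewrite /=; split => _; lia.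
Qed.

Section P9.
Variable R : realFieldType.
Local Notation M4 := 'M[R]_4.

Lemma qm_inj (a b c d a' b' c' d' : R) : qm a b c d = qm a' b' c' d' ->
  [/\ a = a', b = b', c = c' & d = d'].
Proof.
move=> H.
have E p : qm a b c d p ord0 = qm a' b' c' d' p ord0 by rewrite H.
move: (E (@Ordinal 4 0 isT)) (E (@Ordinal 4 1 isT)) (E (@Ordinal 4 2 isT)) (E (@Ordinal 4 3 isT)).
rewrite !mxE /cmul /cl_sign /= ?mulr1n ?mulr0n.
by rewrite !(mulr1, mulr0, addr0, add0r) => -> -> -> ->.
Qed.

Lemma Lam_opp it (Z : seq 'I_2 -> M4) : Lam it (fun w => - Z w) = - Lam it Z.
Proof.
rewrite -scaleN1r -Lam_scale; apply: Lam_ext => w _; by rewrite scaleN1r.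
Qed.

Lemma Jm_qm : Jm R = qm 0 0 0 1.
Proof. by rewrite /Jm /Jq /= rmorph0 rmorph1. Qed.


End P9.

Unset Implicit Arguments.

Theorem mainTheorem2 (R : realFieldType) (op : FQop R) (s : FQidx)
    (f : series R) (iota : seq 'I_2) :
  ortho_inv op ->
  component op s = Some f ->
  red iota \notin [:: [::]; [:: letter2]] ->
  (s = I0 \/ s = I12 \/ red iota \notin [:: [:: letter1]; [:: letter2; letter1]]) ->
  ptilde f (map letter8 iota) = 0.
Proof.
move=> Hinv Hc Hr Hs.
set N := size (map letter8 iota).
have HN : forall w : seq 'I_2, size w = size iota -> size w = N by move=> w ->; rewrite /N size_map.
have [HC0 HC2] := alt_ccz (red_alt iota).
rewrite (ccz_red iota).1 in HC0 HC2.
have c0 : ((ccz iota)%:~R : R) != 0 by rewrite intr_eq0 HC0.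
case: op Hinv Hc => [f0|f1 f2|f0] Hinv Hc.
-
  case: s Hs Hc => Hs //= [Hf]; subst f0.
  rewrite /ortho_inv /Xi /= -/(rB R) -/(rT R) in Hinv.
  case: Hinv => _ H.
  have L1 : Lam iota (fun w => Phi (eval f (rB R)).2 w) = 0.
    by rewrite (Lam_ext (Z' := fun _ => 0)) ?Lam0 // => w Hw; rewrite (Phi_EB f (HN w Hw)).2.
  have L2 : Lam iota (fun w => Phi (eval f (rT R)).2 w) = ((ccz iota)%:~R * ptilde f (map letter8 iota)) *: Jm R.
    by rewrite (Lam_ext (Z' := Df f N)) ?Lam_Df // => w Hw; rewrite (Phi_ET f (HN w Hw)).2.
  have : Lam iota (fun w => Phi (eval f (rB R)).2 w) = Lam iota (fun w => Phi (eval f (rT R)).2 w).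
    by apply: Lam_ext => w _; apply: Phi_aeq.
  rewrite L1 L2 Jm_qm qm_scale q_zero => /qm_inj [_ _ _].
  rewrite mulr1 => /esym /eqP; rewrite mulf_eq0 (negbTE c0) /= => /eqP //.
-
  have Hs' : red iota \notin [:: [:: letter1]; [:: letter2; letter1]].
    by case: s Hs Hc => -[] // [] //.
  have c2 : ((ccz iota)%:~R : R) + 2 != 0.
    have : ccz iota != -2.
      apply: HC2; move: Hr Hs'; rewrite !inE; by do 4 case: (_ == _).
    by apply: contra => /eqP H; rewrite -(eqr_int R) rmorphN /= -[(2 : int)%:~R]/(2%:R); rewrite -subr_eq0 opprK H.
  rewrite /ortho_inv /Xi /= -/(rB R) -/(rT R) in Hinv.
  case: Hinv => [[_ H1] [_ H2]].
  have := Lam_ext (it := iota) (fun w _ => Phi_aeq w H1).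
  rewrite (Lam_ext (Z' := fun w => (Cf f1 N w *m qmr R rq0 + 0 *m qmr R (0, 1, 0, 0))
     + Cf f2 N w *m qmr R (0, 0, 1, 0))); last first.
    move=> w Hw; rewrite Phi_rot1_2 (Phi_dmul_c _ (img_bQ1 R)).2 (Phi_dmul_c _ (img_bQ2 R)).1.
    by rewrite (Phi_EB f1 (HN w Hw)).1 (Phi_EB f1 (HN w Hw)).2 (Phi_EB f2 (HN w Hw)).1.
  rewrite [X in _ = X -> _](Lam_ext (Z' := fun w =>
     Cf f1 N w *m qmr R (0, 0, 1, 0) + Df f1 N w *m qmr R (0, 1, 0, 0))); last first.
    move=> w Hw; rewrite (Phi_dmul_c _ (img_Q1' R)).2.
    by rewrite (Phi_ET f1 (HN w Hw)).1 (Phi_ET f1 (HN w Hw)).2.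
  (repeat rewrite ?Lam_add ?Lam_mulr); rewrite ?Lam0 !Lam_Cf Lam_Df.
  set g1 := ptilde f1 _; set g2 := ptilde f2 _; set c := (ccz iota)%:~R.
  rewrite /qmr /rq0 Jm_qm q_one ?mul0mx ?rmorph0 ?rmorph1 ?rmorphN ?rmorph1.
  rewrite ?q_zero; repeat rewrite ?qm_scale ?qm_mul ?qm_add.
  move=> /qm_inj [_ _ e1 _].
  have := Lam_ext (it := iota) (fun w _ => Phi_aeq w H2).
  rewrite (Lam_ext (Z' := fun w => (Cf f2 N w *m qmr R rq0 + 0 *m qmr R (0, 0, 1, 0))
     - Cf f1 N w *m qmr R (0, 1, 0, 0))); last first.
    move=> w Hw; rewrite Phi_rot2_2 (Phi_dmul_c _ (img_bQ2 R)).2 (Phi_dmul_c _ (img_bQ1 R)).1.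
    by rewrite (Phi_EB f1 (HN w Hw)).1 (Phi_EB f2 (HN w Hw)).2 (Phi_EB f2 (HN w Hw)).1.
  rewrite [X in _ = X -> _](Lam_ext (Z' := fun w =>
     Cf f2 N w *m qmr R (0, -1, 0, 0) + Df f2 N w *m qmr R (0, 0, 1, 0))); last first.
    move=> w Hw; rewrite (Phi_dmul_c _ (img_Q2' R)).2.
    by rewrite (Phi_ET f2 (HN w Hw)).1 (Phi_ET f2 (HN w Hw)).2.
  (repeat rewrite ?Lam_add ?Lam_mulr ?Lam_opp); rewrite ?Lam0 !Lam_Cf Lam_Df -/g1 -/g2 -/c.
  rewrite /qmr /rq0 Jm_qm q_one ?mul0mx ?rmorph0 ?rmorph1 ?rmorphN ?rmorph1.
  rewrite ?q_zero; repeat rewrite ?qm_scale ?qm_mul ?qm_add ?qm_opp.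
  move=> /qm_inj [_ e2 _ _].
  have E1 : g2 = (1 + c) * g1 by lra.
  have E2 : g1 = (1 + c) * g2 by lra.
  have Hg1 : g1 = 0.
    have : c * (c + 2) * g1 = 0.
      rewrite (_ : c * (c + 2) * g1 = (1 + c) * ((1 + c) * g1) - g1); last by ring.
      by rewrite -E1 -E2 subrr.
    by move/eqP; rewrite !mulf_eq0 (negbTE c0) (negbTE c2) /= => /eqP.
  have Hg2 : g2 = 0 by rewrite E1 Hg1 mulr0.
  by case: s Hs Hc {Hs'} => //= _ [<-]; [exact: Hg1 | exact: Hg2].
-
  case: s Hs Hc => Hs //= [Hf]; subst f0.
  rewrite /ortho_inv /Xi /= -/(rB R) -/(rT R) in Hinv.
  case: Hinv => _ H.
  have := Lam_ext (it := iota) (fun w _ => Phi_aeq w H).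
  rewrite (Lam_ext (Z' := fun w => (Cf f N w *m qmr R (0, 1, 0, 0)) *m qmr R rq0 +
     (Cf f N w *m qmr R rq0 + 0 *m qmr R (0, 1, 0, 0)) *m qmr R (0, 0, 1, 0))); last first.
    move=> w Hw; rewrite (Phi_dmul_c _ (img_bQ2 R)).2 (Phi_dmul_c _ (img_bQ1 R)).1.
    by rewrite (Phi_dmul_c _ (img_bQ1 R)).2 (Phi_EB f (HN w Hw)).1 (Phi_EB f (HN w Hw)).2.
  rewrite [X in _ = X -> _](Lam_ext (Z' := fun w => (Cf f N w *m qmr R (0, 1, 0, 0)) *m qmr R (0, -1, 0, 0) +
     (Cf f N w *m qmr R (0, 0, 1, 0) + Df f N w *m qmr R (0, 1, 0, 0)) *m qmr R (0, 0, 1, 0))); last first.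
    move=> w Hw; rewrite (Phi_dmul_c _ (img_Q2' R)).2 (Phi_dmul_c _ (img_Q1' R)).1.
    by rewrite (Phi_dmul_c _ (img_Q1' R)).2 (Phi_ET f (HN w Hw)).1 (Phi_ET f (HN w Hw)).2.
  (repeat rewrite ?Lam_add ?Lam_mulr); rewrite ?Lam0 Lam_Cf Lam_Df.
  set g := ptilde f _; set c := (ccz iota)%:~R.
  rewrite /qmr /rq0 Jm_qm q_one ?mul0mx ?rmorph0 ?rmorph1 ?rmorphN ?rmorph1.
  rewrite q_zero; repeat rewrite ?qm_scale ?qm_mul ?qm_add.
  move=> /qm_inj [e0 _ _ _].

  have : c * g = 0 by lra.
  by move/eqP; rewrite mulf_eq0 (negbTE c0) => /eqP.
Qed.
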